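(* Let $(S,K,I)$ be a split graph such that $K=\bigcup_{v\in I}N_v$. Let $P=v_1\ldots v_n$, with $n\geq 2$, be an induced path in $\Phi(S)$ with $d_1=\max\{d_i: i\in[n]\}$. Then: (1) $\left|\bigcup_{i=1}^n N_i\right|-d_1$ divides $\sigma_{12}$; (2) if $\Phi(S)=P$, then $|K|-d_1$ divides $\sigma_{12}$.
   Context: A split graph $(S,K,I)$ is a graph $S$ together with a fixed partition $V(S)=K\dot\cup I$, where $K$ is a clique and $I$ is an independent set. For a vertex $v_i$ (or $v$) of $S$, $N_i$ (or $N_v$) denotes its open neighborhood in $S$ and $d_i=|N_i|$ its degree in $S$; for $u,v$ write $\eta_{uv}=|N_u\cap N_v|$. The factor graph $\Phi(S)$ is the loopless multigraph with vertex set $I$ in which, for distinct $u,v\in I$, there is one edge joining $u$ and $v$ for each 2-switch of $S$ acting on $u$ and $v$ (a 2-switch replaces edges $ab,cd$ with $ac,bd$ when $ab,cd\in E(S)$ and $ac,bd\notin E(S)$); equivalently, the multiplicity of the edge $uv$ is $\sigma_{uv}=(d_u-\eta_{uv})(d_v-\eta_{uv})$, and $u,v$ are adjacent iff $\sigma_{uv}>0$. $\sigma_{12}$ denotes $\sigma_{v_1v_2}$. An induced path in $\Phi(S)$ consists of distinct vertices with consecutive ones adjacent and no other pair adjacent (multiplicities ignored for adjacency). *)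

(* Defs.v *)
From mathcomp Require Import all_boot.
Set Implicit Arguments. Unset Strict Implicit. Unset Printing Implicit Defensive.

Definition simple_graph (T : finType) (e : rel T) : Prop :=
  symmetric e /\ irreflexive e.

Definition split_graph (T : finType) (e : rel T) (K I : {set T}) : Prop :=
  [/\ simple_graph e,
      K :|: I = [set: T],
      K :&: I = set0,
      {in K &, forall u v, u != v -> e u v} &
      {in I &, forall u v, ~~ e u v}].

Section Nbhd.
Variables (T : finType) (e : rel T).

Definition N (v : T) : {set T} := [set u | e v u].
Definition deg (v : T) : nat := #|N v|.
Definition eta (u v : T) : nat := #|N u :&: N v|.

(* multiplicity of the edge uv in the factor graph Phi(S) *)
Definition sigma (u v : T) : nat := (deg u - eta u v) * (deg v - eta u v).

(* adjacency in Phi(S) (vertex set I, loopless; multiplicities ignored) *)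
Definition phi_adj (u v : T) : bool := (u != v) && (0 < sigma u v).

(* v_1 ... v_n (given as v 0, ..., v (n-1)) is an induced path in Phi(S),
   whose vertex set is I: distinct vertices of I, consecutive ones adjacent,
   no other pair adjacent. *)
Definition induced_path_phi (I : {set T}) (n : nat) (v : nat -> T) : Prop :=
  [/\ forall i, i < n -> v i \in I,
      forall i j, i < n -> j < n -> v i = v j -> i = j &
      forall i j, i < n -> j < n -> i != j ->
        phi_adj (v i) (v j) = ((i == j.+1) || (j == i.+1))].
End Nbhd.

(* Main.v *)
Require Import Defs.
From mathcomp Require Import all_boot.
From mathcomp Require Import zify.

Lemma sub_N0 (T : finType) (e : rel T) (I : {set T}) (n : nat) (v : nat -> T) i :
  induced_path_phi e I n v ->
  (forall i, i < n -> deg e (v i) <= deg e (v 0)) ->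
  i < n -> 2 <= i -> N e (v i) \subset N e (v 0).
Proof.
move=> [_ Hd Ha] Hmax Hi H2i.
have H0 : 0 < n by lia.
have Hne : (0 != i) by lia.
have := Ha 0 i H0 Hi Hne.
have Hf : ((0 == i.+1) || (i == 1)) = false by apply/negbTE; lia.
rewrite Hf /phi_adj.
have -> : (v 0 != v i).
  apply/eqP => E; have := Hd 0 i H0 Hi E; lia.
rewrite /= => /negbT; rewrite -leqNgt leqn0 /sigma muln_eq0 !subn_eq0 /eta /deg.
case/orP => Hc.
- have Hs : N e (v 0) :&: N e (v i) = N e (v 0).
    apply/eqP; rewrite eqEcard subsetIl Hc //.
  have Hsub : N e (v 0) \subset N e (v i) by rewrite -Hs subsetIr.
  have Hm := Hmax i Hi; rewrite /deg in Hm.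
  have: N e (v 0) == N e (v i) by rewrite eqEcard Hsub Hm.
  by move/eqP=> ->.
- have Hs : N e (v 0) :&: N e (v i) = N e (v i).
    apply/eqP; rewrite eqEcard subsetIr Hc //=; lia.
  by rewrite -Hs subsetIl.
Qed.

Lemma union_eq (T : finType) (e : rel T) (I : {set T}) (n : nat) (v : nat -> T) :
  2 <= n ->
  induced_path_phi e I n v ->
  (forall i, i < n -> deg e (v i) <= deg e (v 0)) ->
  \bigcup_(i < n) N e (v i) = N e (v 0) :|: N e (v 1).
Proof.
move=> Hn Hp Hmax; apply/eqP; rewrite eqEsubset; apply/andP; split.
- apply/bigcupsP => [[i Hi]] _ /=.
  case: i Hi => [|[|i]] Hi.
  + exact: subsetUl.
  + exact: subsetUr.
  + apply: subset_trans (subsetUl _ _); exact: (@sub_N0 _ _ _ _ _ i.+2 Hp Hmax Hi).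
- rewrite subUset; apply/andP; split.
  + have H0 : 0 < n by lia.
    exact: (bigcup_sup (Ordinal H0) isT (F := fun i : 'I_n => N e (v i))).
  + exact: (bigcup_sup (Ordinal Hn) isT (F := fun i : 'I_n => N e (v i))).
Qed.

Theorem corollary2p5 (T : finType) (e : rel T) (K I : {set T})
    (n : nat) (v : nat -> T) :
  split_graph e K I ->
  K = \bigcup_(x in I) N e x ->
  2 <= n ->
  induced_path_phi e I n v ->
  (forall i, i < n -> deg e (v i) <= deg e (v 0)) ->
  (#|\bigcup_(i < n) N e (v i)| - deg e (v 0) %| sigma e (v 0) (v 1))
  /\ (I = [set x | [exists i : 'I_n, v i == x]] ->
      #|K| - deg e (v 0) %| sigma e (v 0) (v 1)).
Proof.
move=> _ HK Hn Hp Hmax.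
have H1 : #|\bigcup_(i < n) N e (v i)| - deg e (v 0) %| sigma e (v 0) (v 1).
  rewrite (@union_eq _ _ _ _ _ Hn Hp Hmax) cardsU /sigma /eta /deg.
  have := subset_leq_card (subsetIr (N e (v 0)) (N e (v 1))).
  move=> Hle.
  have -> : #|N e (v 0)| + #|N e (v 1)| - #|N e (v 0) :&: N e (v 1)| - #|N e (v 0)|
            = #|N e (v 1)| - #|N e (v 0) :&: N e (v 1)| by lia.
  exact: dvdn_mull.
split=> // HI.
suff -> : K = \bigcup_(i < n) N e (v i) by [].
rewrite HK HI; apply/eqP; rewrite eqEsubset; apply/andP; split.
- apply/bigcupsP => x; rewrite inE => /existsP [i /eqP <-].
  exact: (bigcup_sup i isT).
- apply/bigcupsP => i _.
  apply: (bigcup_sup (v i)); rewrite inE; apply/existsP; exists i; by [].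
Qed.
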